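(* Let $P\subset\mathbb{R}^d$ be a polytope inscribed into a sphere centered at the origin and let $v$ be a vertex of $P$. Then the neighbors of $v$ in the graph of $P$ are exactly the points $s_W(v)$, where $W$ ranges over the walls of the normal cone $N_vP$.
   Context: The normal cone of a vertex $v$ is $N_vP=\{c\in\mathbb{R}^d: \langle c,v\rangle\ge\langle c,y\rangle \ \forall y\in P\}$. In the (full-dimensional) normal fan of $P$, a wall is a cone of dimension $d-1$; a wall of $N_vP$ is a $(d-1)$-dimensional face of it. For a wall $W$ with linear span $\{x:\langle\alpha,x\rangle=0\}$, $s_W(x)=x-2\frac{\langle\alpha,x\rangle}{\langle\alpha,\alpha\rangle}\alpha$ is the reflection in that hyperplane. *)

(* Defs.v *)
From HB Require Import structures.
From mathcomp Require Import all_boot all_order all_algebra.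
Set Implicit Arguments. Unset Strict Implicit. Unset Printing Implicit Defensive.
Import Order.TTheory GRing.Theory Num.Theory.
Local Open Scope ring_scope.

Section Defs.
Variables (R : realFieldType) (d : nat).
Notation vec := 'rV[R]_d.

Definition dot (u w : vec) : R := \sum_(i < d) u 0 i * w 0 i.

Definition conv (V : seq vec) (x : vec) : Prop :=
  exists lam : 'I_(size V) -> R,
    (forall i, 0 <= lam i) /\ \sum_i lam i = 1 /\ x = \sum_i lam i *: V`_i.

(* F is a face of the convex set K: intersection of K with a supporting
   (weakly valid) hyperplane {x | <c,x> = b}, where <c,y> <= b on K
   (c = 0 allowed, giving K itself or the empty face). *)
Definition is_face (K F : vec -> Prop) : Prop :=
  exists (c : vec) (b : R),
    (forall y, K y -> dot c y <= b) /\
    (forall x, F x <-> (K x /\ dot c x = b)).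

Definition is_vertex (P : vec -> Prop) (v : vec) : Prop :=
  is_face P (fun x => x = v).

Definition neighbor (P : vec -> Prop) (v w : vec) : Prop :=
  w <> v /\ is_face P (conv [:: v; w]).

Definition inscribed (P : vec -> Prop) : Prop :=
  exists r : R, 0 < r /\ forall x, is_vertex P x -> dot x x = r ^+ 2.

Definition normal_cone (P : vec -> Prop) (v : vec) (c : vec) : Prop :=
  forall y, P y -> dot c y <= dot c v.

(* (affine) dimension: A has dimension k iff A is nonempty, contains k+1
   affinely independent points, and no more *)
Definition affdim (A : vec -> Prop) (k : nat) : Prop :=
  (exists a0, A a0 /\ exists s : seq vec,
      size s = k /\ (forall x, x \in s -> A (a0 + x)) /\ free s) /\
  (forall a0 (s : seq vec), A a0 -> (forall x, x \in s -> A (a0 + x)) ->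
      free s -> (size s <= k)%N).

Definition is_wall (C W : vec -> Prop) : Prop :=
  is_face C W /\ exists k, affdim W k /\ k.+1 = d.

Definition lspan (A : vec -> Prop) (x : vec) : Prop :=
  exists s : seq vec, (forall y, y \in s -> A y) /\ x \in <<s>>%VS.

Definition refl (alpha x : vec) : vec :=
  x - (2 * dot alpha x / dot alpha alpha) *: alpha.

End Defs.

(* Main.v *)
Require Import Defs.
From HB Require Import structures.
From mathcomp Require Import all_boot all_order all_algebra.
From mathcomp Require Import ring lra zify.
From Stdlib Require Import Classical.
Set Implicit Arguments. Unset Strict Implicit. Unset Printing Implicit Defensive.
Import Order.TTheory GRing.Theory Num.Theory.
Local Open Scope ring_scope.

Section S.
Variables (R : realFieldType) (d : nat).
Notation vec := 'rV[R]_d.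
Implicit Types (u w x y a : vec).

Lemma dotE u w : dot u w = (u *m w^T) 0 0.
Proof. by rewrite /dot mxE; apply: eq_bigr => i _; rewrite mxE. Qed.

Lemma dotC u w : dot u w = dot w u.
Proof. by rewrite /dot; apply: eq_bigr => i _; rewrite mulrC. Qed.

Lemma dotDr u x y : dot u (x + y) = dot u x + dot u y.
Proof. by rewrite /dot -big_split; apply: eq_bigr => i _; rewrite mxE mulrDr. Qed.

Lemma dotZr u k x : dot u (k *: x) = k * dot u x.
Proof. by rewrite /dot mulr_sumr; apply: eq_bigr => i _; rewrite mxE mulrCA. Qed.

Lemma dotNr u x : dot u (- x) = - dot u x.
Proof. by rewrite -scaleN1r dotZr mulN1r. Qed.

Lemma dotBr u x y : dot u (x - y) = dot u x - dot u y.
Proof. by rewrite dotDr dotNr. Qed.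

Lemma dot0r u : dot u 0 = 0.
Proof. by rewrite -(scale0r 0) dotZr mul0r. Qed.

Lemma dotDl u x y : dot (x + y) u = dot x u + dot y u.
Proof. by rewrite !(dotC _ u) dotDr. Qed.
Lemma dotZl u k x : dot (k *: x) u = k * dot x u.
Proof. by rewrite !(dotC _ u) dotZr. Qed.
Lemma dotNl u x : dot (- x) u = - dot x u.
Proof. by rewrite !(dotC _ u) dotNr. Qed.
Lemma dotBl u x y : dot (x - y) u = dot x u - dot y u.
Proof. by rewrite !(dotC _ u) dotBr. Qed.
Lemma dot0l u : dot 0 u = 0.
Proof. by rewrite dotC dot0r. Qed.

Lemma dot_sumr (I : finType) u (F : I -> vec) :
  dot u (\sum_i F i) = \sum_i dot u (F i).
Proof.
elim/big_rec2: _ => [|i y1 y2 _ <-]; first exact: dot0r.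
by rewrite dotDr.
Qed.

Lemma dot_ge0 x : 0 <= dot x x.
Proof. by rewrite /dot; apply: sumr_ge0 => i _; rewrite -expr2 sqr_ge0. Qed.

Lemma dot_eq0 x : (dot x x == 0) = (x == 0).
Proof.
apply/idP/eqP => [|->]; last by rewrite dot0r.
rewrite /dot psumr_eq0 => [/allP H|i _]; last by rewrite -expr2 sqr_ge0.
apply/rowP => i; rewrite mxE.
by have /eqP := H i (mem_index_enum i); rewrite -expr2 => /eqP; rewrite sqrf_eq0 => /eqP.
Qed.

Lemma dot_gt0 x : x != 0 -> 0 < dot x x.
Proof. by move=> nx; rewrite lt_def dot_eq0 nx dot_ge0. Qed.

Definition phi a : 'Hom(vec, 'M[R]_1) := linfun (mulmxr a^T).

Lemma in_ker a x : (x \in lker (phi a)) = (dot x a == 0).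
Proof.
rewrite memv_ker lfunE /= dotE; apply/eqP/eqP => [->|H]; first by rewrite mxE.
by apply/matrixP => i j; rewrite !ord1 H mxE.
Qed.

Lemma dim_hyper a : a != 0 -> \dim (lker (phi a)) = d.-1.
Proof.
move=> na.
have := limg_ker_dim (phi a) fullv.
rewrite capfv dimvf dim_matrix.
have E1 : \dim (phi a @: fullv) = 1%N.
  apply/eqP; rewrite eqn_leq; apply/andP; split.
    by have := dimvS (subvf (phi a @: fullv)); rewrite dimvf dim_matrix.
  rewrite lt0n dimv_eq0; apply/negP => /eqP H.
  have := memv_img (phi a) (memvf a); rewrite H memv0 -memv_ker in_ker.
  by rewrite (negPf (lt0r_neq0 (dot_gt0 na))).
move=> H0; rewrite E1 in H0; lia.
Qed.


Lemma mono_eps (e e1 f g : R) : 0 < e -> e <= e1 -> f < 0 -> f + e1 * g < 0 ->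
  f + e * g < 0.
Proof.
move=> e0 ee1 f0 h; case: (lerP 0 g) => g0.
  by apply: le_lt_trans h; rewrite lerD2l ler_wpM2r.
by apply: lt_trans f0; rewrite gtrDl pmulr_rlt0.
Qed.

Lemma eps_lemma (T : eqType) (l : seq T) (p : T -> Prop) (f g : T -> R) :
  (forall t, t \in l -> p t -> f t < 0) ->
  exists e, 0 < e /\ forall t, t \in l -> p t -> f t + e * g t < 0.
Proof.
elim: l => [|t l IH] H.
  by exists 1; split => // t; rewrite in_nil.
have [e1 [e10 He1]] : exists e, 0 < e /\ forall t, t \in l -> p t -> f t + e * g t < 0.
  by apply: IH => s sl; apply: H; rewrite inE sl orbT.
pose e2 := if g t <= 0 then 1 else (if f t < 0 then - f t / (2 * g t) else 1).
have e20 : 0 < e2.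
  rewrite /e2; case: ifP => // /negbT; rewrite -ltNge => g0.
  case: ifP => // f0; apply: divr_gt0; first by rewrite oppr_gt0.
  by rewrite mulr_gt0.
have He2 : p t -> f t + e2 * g t < 0.
  move=> pt; have f0 : f t < 0 by apply: H => //; rewrite mem_head.
  rewrite /e2; case: ifP => g0.
    by apply: le_lt_trans f0; rewrite gerDl mul1r.
  move/negbT: g0; rewrite -ltNge => g0; rewrite f0.
  have gn : g t != 0 by rewrite gt_eqF.
  have -> : f t + - f t / (2 * g t) * g t = f t / 2 by field.
  by rewrite pmulr_llt0 // invr_gt0 ltr0n.
exists (if e1 <= e2 then e1 else e2); split; first by case: ifP.
move=> s; rewrite inE => /orP [/eqP -> | sl] ps.
  case: ifP => h; last exact: He2.
  by apply: (mono_eps e10 h); [apply: H; rewrite ?mem_head | apply: He2].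
case: ifP => h; first exact: He1.
have h' : e2 <= e1 by rewrite ltW // ltNge h.
by apply: (mono_eps e20 h'); [apply: H; rewrite ?inE ?sl ?orbT | apply: He1].
Qed.


Lemma conv_le (V : seq vec) c b y :
  (forall u, u \in V -> dot c u <= b) -> conv V y -> dot c y <= b.
Proof.
move=> H [lam [l0 [l1 ->]]]; rewrite dot_sumr.
have -> : b = \sum_i lam i * b by rewrite -mulr_suml l1 mul1r.
apply: ler_sum => i _; rewrite dotZr ler_wpM2l //; apply: H.
by rewrite mem_nth.
Qed.

Lemma conv_eq (V : seq vec) c b y :
  (forall u, u \in V -> dot c u <= b) -> conv V y -> dot c y = b ->
  exists lam : 'I_(size V) -> R,
    [/\ (forall i, 0 <= lam i), \sum_i lam i = 1, y = \sum_i lam i *: V`_i &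
        forall i, lam i != 0 -> dot c V`_i = b].
Proof.
move=> H [lam [l0 [l1 yE]]] Hy; exists lam; split => // i li.
have Hi : forall i, 0 <= lam i * (b - dot c V`_i).
  by move=> j; rewrite mulr_ge0 // subr_ge0 H // mem_nth.
have S0 : \sum_i lam i * (b - dot c V`_i) = 0.
  have -> : \sum_i lam i * (b - dot c V`_i) = b * \sum_i lam i - dot c y.
    rewrite yE dot_sumr mulr_sumr -sumrB; apply: eq_bigr => j _.
    by rewrite dotZr; ring.
  by rewrite l1 mulr1 Hy subrr.
have /eqP := (psumr_eq0P (fun j (_ : true) => Hi j) S0 (i:=i) isT).
rewrite mulf_eq0 (negPf li) /= subr_eq0 => /eqP <-; by [].
Qed.

Lemma conv_mem (V : seq vec) u : u \in V -> conv V u.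
Proof.
move=> uV; have ui : (index u V < size V)%N by rewrite index_mem.
pose j := Ordinal ui.
exists (fun i => (i == j)%:R); split; first by move=> i; rewrite ler0n.
split; first by rewrite (bigD1 j) //= eqxx big1 ?addr0 // => i /negPf ->.
rewrite (bigD1 j) //= eqxx scale1r big1 ?addr0 ?nth_index //.
by move=> i /negPf ->; rewrite scale0r.
Qed.

Lemma conv_seg (V : seq vec) x y t :
  conv V x -> conv V y -> 0 <= t <= 1 -> conv V ((1 - t) *: x + t *: y).
Proof.
move=> [l [l0 [l1 ->]]] [m [m0 [m1 ->]]] /andP [t0 t1].
exists (fun i => (1 - t) * l i + t * m i); split.
  by move=> i; rewrite addr_ge0 // mulr_ge0 // subr_ge0.
split; first by rewrite big_split /= -!mulr_sumr l1 m1 !mulr1 subrK.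
rewrite !scaler_sumr -big_split /=; apply: eq_bigr => i _.
by rewrite !scalerA -scalerDl.
Qed.

Lemma vertex_of (V : seq vec) c z : conv V z ->
  (forall u, u \in V -> dot c u <= dot c z /\ (dot c u = dot c z -> u = z)) ->
  is_vertex (conv V) z.
Proof.
move=> zV H; exists c, (dot c z); split.
  by move=> y; apply: conv_le => u /H [].
move=> x; split => [->|[Px Hx]]; first by [].
have [lam [l0 l1 -> Hl]] := conv_eq (fun u uV => proj1 (H u uV)) Px Hx.
have -> : \sum_i lam i *: V`_i = \sum_i lam i *: z.
  apply: eq_bigr => i _; have [->|li] := eqVneq (lam i) 0; first by rewrite !scale0r.
  by rewrite (proj2 (H _ (mem_nth 0 (ltn_ord i))) (Hl i li)).
by rewrite -scaler_suml l1 scale1r.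
Qed.

Lemma lspan_perp (s : seq vec) a x :
  (forall y, y \in s -> dot a y = 0) -> x \in <<s>>%VS -> dot a x = 0.
Proof.
move=> H xs.
have /span_subvP sub : {subset s <= lker (phi a)}.
  by move=> y ys; rewrite in_ker dotC H.
by have := subvP sub _ xs; rewrite in_ker dotC => /eqP.
Qed.

Lemma par_lemma a x : a != 0 -> (forall y, dot a y = 0 -> dot x y = 0) ->
  x = (dot a x / dot a a) *: a.
Proof.
move=> na H; have aa : dot a a != 0 by rewrite lt0r_neq0 ?dot_gt0.
set y := x - (dot a x / dot a a) *: a.
have ay : dot a y = 0 by rewrite /y dotBr dotZr; field.
have xy := H _ ay.
have yy : dot y y = 0.
  by rewrite {1}/y dotBl dotZl xy dotC ay mulr0 subr0.
by apply/eqP; rewrite -subr_eq0 -/y -dot_eq0 yy.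
Qed.

Lemma span_scale (X : seq vec) (e : R) : e != 0 ->
  <<map (fun x => e *: x) X>>%VS = <<X>>%VS.
Proof.
move=> e0; apply/eqP; rewrite eqEsubv; apply/andP; split; apply/span_subvP => x.
  by move=> /mapP [y yX ->]; rewrite rpredZ // memv_span.
move=> xX; have -> : x = e^-1 *: (e *: x) by rewrite scalerA mulVf ?scale1r.
by rewrite rpredZ // memv_span //; apply/mapP; exists x.
Qed.

Lemma conv2 v w x : conv [:: v; w] x <-> exists t, 0 <= t <= 1 /\ x = v + t *: (w - v).
Proof.
split.
  move=> [lam [l0 [l1 ->]]].
  move: l1; rewrite !big_ord_recl !big_ord0 /= !addr0 => l1.
  set a := lam _ in l1 *; set b := lam _ in l1 *.
  exists b.
  have a0 : 0 <= a by apply: l0.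
  have b0 : 0 <= b by apply: l0.
  split; first by rewrite b0 /= -l1 lerDr.
  have -> : a = 1 - b by rewrite -l1 addrK.
  by rewrite scalerBr scalerBl scale1r addrA [RHS]addrAC.
move=> [t [/andP [t0 t1] ->]].
exists (fun i : 'I_2 => if val i == 0%N then 1 - t else t); split.
  by move=> [[|i] Hi] /=; rewrite ?subr_ge0.
rewrite !big_ord_recl !big_ord0 /= !addr0; split; first by rewrite subrK.
by rewrite scalerBr scalerBl scale1r addrA [RHS]addrAC.
Qed.

Lemma forward (V : seq vec) v w :
  inscribed (conv V) -> is_vertex (conv V) v -> neighbor (conv V) v w ->
  exists W : vec -> Prop, is_wall (normal_cone (conv V) v) W /\
    exists alpha : vec, alpha != 0 /\ (forall x, lspan W x <-> dot alpha x = 0) /\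
      w = refl alpha v.
Proof.
move=> [r [r0 Hr]] Hv [wv [c [b [Hle Hiff]]]].
have [Pv cv] : conv V v /\ dot c v = b.
  by apply/Hiff/conv2; exists 0; rewrite lexx ler01 scale0r addr0.
have [Pw cw] : conv V w /\ dot c w = b.
  by apply/Hiff/conv2; exists 1; rewrite lexx ler01 scale1r addrC subrK.
set al := w - v.
have an : al != 0 by rewrite subr_eq0; apply/eqP.
have wE : w = v + al by rewrite /al addrC subrK.
have ca : dot c al = 0 by rewrite /al dotBr cw cv subrr.
have aa : 0 < dot al al by apply: dot_gt0.
have split_u : forall u, u \in V -> dot c u < b \/ exists t, 0 <= t <= 1 /\ u = v + t *: al.
  move=> u uV; have := Hle u (conv_mem uV); rewrite le_eqVlt => /orP [/eqP e|->]; last by left.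
  by right; apply/conv2; apply/Hiff; split => //; apply: conv_mem.
clearbody al.
have H0 : forall u, u \in V -> dot c u < b -> dot c u - b < 0.
  by move=> u _; rewrite subr_lt0.
have [e [e0 He]] := @eps_lemma _ V (fun u => dot c u < b)
   (fun u => dot c u - b) (fun u => dot al u - dot al w)
   H0.
have vw : is_vertex (conv V) w.
  apply: (@vertex_of V (c + e *: al) w Pw) => u uV.
  have key : dot (c + e *: al) u - dot (c + e *: al) w
     = (dot c u - b) + e * (dot al u - dot al w).
    by rewrite !dotDl !dotZl cw; ring.
  case: (split_u u uV) => [h|[t [/andP [t0 t1] uE]]].
    have := He u uV h; rewrite -key subr_lt0 => lt; split; first exact: ltW.
    by move=> eq; move: lt; rewrite eq ltxx.
  have cu : dot c u = b by rewrite uE dotDr dotZr ca mulr0 addr0.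
  have au : dot al u - dot al w = (t - 1) * dot al al.
    by rewrite uE wE !dotDr dotZr; ring.
  rewrite cu subrr add0r au in key.
  split; first by rewrite -subr_le0 key; have hh := mulr_gt0 e0 aa; nra.
  move=> /eqP; rewrite -subr_eq0 key !mulf_eq0 gt_eqF //= (gt_eqF aa) orbF subr_eq0.
  by move=> /eqP t1'; rewrite uE t1' scale1r -wE.
have ww := Hr w vw; have vv := Hr v Hv.
pose W := fun x => normal_cone (conv V) v x /\ dot al x = 0.
have Kx : forall xs : seq vec, (forall x, x \in xs -> dot al x = 0) ->
    exists e, 0 < e /\ forall x, x \in xs -> W (c + e *: x).
  move=> xs Hxs.
  have H1 : forall p : vec * vec, p \in [seq (x, u) | x <- xs, u <- V] ->
      dot c p.2 < b -> dot c p.2 - b < 0.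
    by move=> p _; rewrite subr_lt0.
  have [e1 [e10 He1]] := @eps_lemma _ _ (fun p : vec * vec => dot c p.2 < b)
     (fun p => dot c p.2 - b) (fun p => dot p.1 p.2 - dot p.1 v) H1.
  exists e1; split => // x xxs; split; last first.
    by rewrite dotDr dotZr dotC ca Hxs // mulr0 addr0.
  move=> y Py; apply: (conv_le _ Py) => u uV.
  rewrite -subr_le0.
  have -> : dot (c + e1 *: x) u - dot (c + e1 *: x) v
     = (dot c u - b) + e1 * (dot x u - dot x v).
    by rewrite !dotDl !dotZl cv; ring.
  case: (split_u u uV) => [h|[t [_ uE]]].
    apply: ltW; exact: (He1 (x, u) (allpairs_f pair xxs uV) h).
  have cu : dot c u = b by rewrite uE dotDr dotZr ca mulr0 addr0.
  have xu : dot x u - dot x v = 0.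
    by rewrite uE dotDr dotZr (dotC x al) Hxs // mulr0 addr0 subrr.
  by rewrite cu xu subrr mulr0 addr0.
have Wc : W c.
  split; last by rewrite dotC.
  by move=> y Py; rewrite cv; apply: Hle.
have d0 : (0 < d)%N.
  case: (posnP d) => // d0; case/eqP: an; apply/rowP => i.
  by have := ltn_ord i; rewrite {2}d0.
exists W; split.
  split.
    exists al, 0; split; last by [].
    move=> c' Nc'; have := Nc' w Pw; rewrite wE dotDr gerDl dotC.
    by [].
  exists d.-1; split; last by rewrite prednK.
  split.
    exists c; split => //.
    pose B := vbasis (lker (phi al)).
    have HB : forall x, x \in (B : seq vec) -> dot al x = 0.
      by move=> x xB; have := vbasis_mem xB; rewrite in_ker dotC => /eqP.
    have [e2 [e20 He2]] := Kx B HB.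
    exists (map (fun x => e2 *: x) B); split.
      by rewrite size_map size_tuple dim_hyper.
    split; first by move=> x /mapP [y yB ->]; apply: He2.
    rewrite /free span_scale ?size_map; last by rewrite gt_eqF.
    exact: basis_free (vbasisP _).
  move=> a0 s Wa0 Hs fs.
  have sub : {subset s <= lker (phi al)}.
    move=> y ys; have [_ h] := Hs y ys; rewrite in_ker dotC.
    by rewrite dotDr (proj2 Wa0) add0r in h; rewrite h.
  move: fs; rewrite /free => /eqP <-; rewrite -(dim_hyper an).
  by apply: dimvS; apply/span_subvP.
exists al; split => //; split.
  move=> x; split.
    by move=> [s [Hs xs]]; apply: (lspan_perp (s := s)) => // y ys; case: (Hs y ys).
  move=> ax; have [e2 [e20 He2]] : exists e, 0 < e /\ forall y, y \in [:: x] -> W (c + e *: y).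
    by apply: Kx => y; rewrite inE => /eqP ->.
  exists [:: c; c + e2 *: x]; split.
    by move=> y; rewrite !inE => /orP [/eqP ->|/eqP ->] //; apply: He2; rewrite inE.
  have xE : x = e2^-1 *: (c + e2 *: x) - e2^-1 *: c.
    by rewrite scalerDr scalerA mulVf ?gt_eqF // scale1r addrAC subrr add0r.
  by rewrite {1}xE rpredB ?rpredZ ?memv_span ?inE ?eqxx ?orbT.
have hw := Hr w vw; have hv := Hr v Hv.
rewrite /refl.
have an2 : dot al al != 0 by rewrite gt_eqF.
have k : 2 * dot al v / dot al al = -1.
  have e1 : dot al v = dot w v - dot v v by rewrite wE dotDl addrC addKr.
  have e3 : dot al al = 2 * (dot v v - dot w v).
    have : dot w w = dot v v + 2 * dot al v + dot al al.
      by rewrite wE !dotDl !dotDr (dotC v al); ring.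
    by rewrite e1 hw hv => h; lra.
  have ne : dot v v - dot w v != 0.
    by apply: contraNneq an2 => h; rewrite e3 h mulr0.
  by rewrite e3 e1; field.
by rewrite k scaleN1r opprK -wE.
Qed.

Lemma argmax (T : eqType) (l : seq T) (p : pred T) (f : T -> R) :
  has p l -> exists z0, [/\ z0 \in l, p z0 & forall z, z \in l -> p z -> f z <= f z0].
Proof.
elim: l => [//|a l IH] /=; case pa: (p a) => /=.
  case hl: (has p l).
    have [z0 [xl px0 H]] := IH hl.
    case: (lerP (f a) (f z0)) => h.
      exists z0; split => //; first by rewrite inE xl orbT.
      by move=> z; rewrite inE => /orP [/eqP ->|xl']; [|apply: H].
    exists a; split => //; first by rewrite mem_head.
    move=> z; rewrite inE => /orP [/eqP ->|xl'] // px.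
    by apply: le_trans (ltW h); apply: H.
  move=> _; exists a; split => //; first by rewrite mem_head.
  move=> z; rewrite inE => /orP [/eqP ->|xl'] // px.
  by move/hasPn: hl => /(_ z xl'); rewrite px.
move=> hl; have [z0 [xl px0 H]] := IH hl; exists z0; split => //.
  by rewrite inE xl orbT.
move=> z; rewrite inE => /orP [/eqP ->|xl']; [by rewrite pa | by apply: H].
Qed.

Definition tpar (b v u : vec) := dot b (u - v) / dot b b.

Lemma core (V : seq vec) v b cs :
  inscribed (conv V) -> is_vertex (conv V) v -> b != 0 ->
  normal_cone (conv V) v cs -> dot b cs = 0 ->
  (forall u, u \in V -> dot cs (u - v) < 0 \/ u - v = tpar b v u *: b) ->
  (exists2 u1, u1 \in V & 0 < dot b (u1 - v) /\ ~~ (dot cs (u1 - v) < 0)) ->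
  neighbor (conv V) v (refl b v).
Proof.
move=> [r [r0 Hr]] Hv bn Ncs bcs H3 [u1 u1V [t1p ns1]].
have bb : 0 < dot b b by apply: dot_gt0.
have csb : dot cs b = 0 by rewrite dotC.
pose ns := fun u => ~~ (dot cs (u - v) < 0).
have nsP : forall u, u \in V -> ns u -> u - v = tpar b v u *: b.
  by move=> u uV; rewrite /ns; case: (H3 u uV) => [->|].
have [u0 [u0V ns0 Hmax]] := argmax (tpar b v) (introT hasP (ex_intro2 _ _ u1 u1V ns1) : has ns V).
set T := tpar b v u0.
have t1 : 0 < tpar b v u1 by rewrite /tpar divr_gt0.
have T0 : 0 < T by apply: lt_le_trans t1 (Hmax _ u1V ns1).
have u0E : u0 - v = T *: b by apply: nsP.
have Pu0 : conv V u0 by apply: conv_mem.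
have [cv [bv [Hle Hiff]]] := Hv.
have [Pv cvv] : conv V v /\ dot cv v = bv by apply/Hiff.
have tge0 : forall u, u \in V -> ns u -> 0 <= tpar b v u.
  move=> u uV nsu; rewrite leNgt; apply/negP => tn.
  have uE := nsP u uV nsu.
  have k1 : dot cv u0 <= dot cv v by rewrite cvv; apply: Hle.
  have k2 : dot cv u <= dot cv v by rewrite cvv; apply: Hle; apply: conv_mem.
  have e0 : dot cv u0 = dot cv v + T * dot cv b.
    by rewrite -dotZr -u0E dotBr addrC subrK.
  have e1 : dot cv u = dot cv v + tpar b v u * dot cv b.
    by rewrite -dotZr -uE dotBr addrC subrK.
  have k0 : dot cv b = 0.
    rewrite e0 gerDl in k1; rewrite e1 gerDl in k2.
    apply/eqP; rewrite eq_le; apply/andP; split.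
      by rewrite -(pmulr_rle0 _ T0).
    by rewrite -(nmulr_rle0 _ tn).
  have : u = v by apply/Hiff; split; [apply: conv_mem | rewrite e1 k0 mulr0 addr0].
  move=> uv; move: uE; rewrite {1}uv subrr => /esym /eqP; rewrite scaler_eq0 (negPf bn) orbF.
  by rewrite (lt_eqF tn).
have H0 : forall u, u \in V -> dot cs (u - v) < 0 -> dot cs (u - v) < 0 by [].
have [e [e0 He]] := @eps_lemma _ V (fun u => dot cs (u - v) < 0)
   (fun u => dot cs (u - v)) (fun u => dot b (u - u0)) H0.
have dE : forall u, u - u0 = (u - v) - (u0 - v).
  by move=> u; rewrite opprB addrA subrK.
have vu0 : is_vertex (conv V) u0.
  apply: (@vertex_of V (cs + e *: b) u0 Pu0) => u uV.
  have key : dot (cs + e *: b) u - dot (cs + e *: b) u0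
     = dot cs (u - v) + e * dot b (u - u0).
    have c0 : dot cs (u0 - v) = 0 by rewrite u0E dotZr csb mulr0.
    by rewrite -dotBr dotDl dotZl (dE u) dotBr c0 subr0 -(dE u).
  case: (boolP (ns u)) => nsu; last first.
    move/negPn: nsu => h.
    have := He u uV h; rewrite -key subr_lt0 => lt; split; first exact: ltW.
    by move=> eq; move: lt; rewrite eq ltxx.
  have uE := nsP u uV nsu.
  have tle := Hmax u uV nsu.
  have k2 : dot b (u - u0) = (tpar b v u - T) * dot b b.
    by rewrite dE uE u0E dotBr !dotZr mulrBl.
  have k1 : dot cs (u - v) = 0 by rewrite uE dotZr csb mulr0.
  rewrite k1 add0r k2 in key.
  split; first by rewrite -subr_le0 key mulrCA; apply: mulr_le0_ge0; [rewrite subr_le0 | apply: ltW; apply: mulr_gt0].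
  move=> /eqP; rewrite -subr_eq0 key !mulf_eq0 gt_eqF //= (gt_eqF bb) orbF subr_eq0.
  move=> /eqP tT; apply/eqP; rewrite -subr_eq0 dE uE u0E tT subrr //.
have hw := Hr u0 vu0; have hv := Hr v Hv.
have reflE : refl b v = u0.
  rewrite /refl.
  have k : 2 * dot b v / dot b b = - T.
    have : dot u0 u0 = dot v v + 2 * T * dot b v + T ^+ 2 * dot b b.
      have -> : u0 = v + T *: b by rewrite -u0E addrC subrK.
      by rewrite !dotDl !dotDr !dotZl !dotZr (dotC v b); ring.
    rewrite hw hv => h.
    have h' : T * (2 * dot b v + T * dot b b) = 0 by rewrite -[LHS]addr0; lra.
    move/eqP: h'; rewrite mulf_eq0 gt_eqF //= addr_eq0 => /eqP ->.
    by field; rewrite gt_eqF.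
  by rewrite k scaleNr opprK -u0E addrC subrK.
rewrite reflE; split.
  move=> u0v; move: u0E; rewrite u0v subrr => /esym /eqP.
  by rewrite scaler_eq0 (negPf bn) orbF gt_eqF.
exists cs, (dot cs v); split; first by move=> y Py; apply: Ncs.
have csu0 : dot cs u0 = dot cs v.
  by apply/eqP; rewrite -subr_eq0 -dotBr u0E dotZr csb mulr0.
move=> x; split.
  move=> /conv2 [s [s01 ->]]; split.
    have -> : v + s *: (u0 - v) = (1 - s) *: v + s *: u0.
      by rewrite scalerBr scalerBl scale1r addrA [RHS]addrAC.
    exact: conv_seg.
  by rewrite dotDr dotZr u0E dotZr csb !mulr0 addr0.
move=> [Px Hx].
have Hle' : forall u, u \in V -> dot cs u <= dot cs v.
  by move=> u uV; apply: Ncs; apply: conv_mem.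
have [lam [l0 l1 xE Hl]] := conv_eq Hle' Px Hx.
pose tt := fun i : 'I_(size V) => tpar b v V`_i.
have Hi : forall i, lam i *: (V`_i - v) = (lam i * tt i) *: b /\
      0 <= lam i * tt i <= lam i * T.
  move=> i; have [->|li] := eqVneq (lam i) 0.
    by rewrite !mul0r !scale0r lexx.
  have iV : V`_i \in V by apply: mem_nth.
  have nsi : ns V`_i by rewrite /ns dotBr Hl // subrr ltxx.
  split; first by rewrite (nsP _ iV nsi) scalerA.
  by rewrite mulr_ge0 ?tge0 //= ler_wpM2l ?Hmax.
have xv : x - v = (\sum_i lam i * tt i) *: b.
  rewrite xE scaler_suml.
  have -> : v = \sum_i lam i *: v by rewrite -scaler_suml l1 scale1r.
  rewrite -sumrB; apply: eq_bigr => i _.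
  by rewrite -scalerBr (proj1 (Hi i)).
apply/conv2; exists ((\sum_i lam i * tt i) / T); split.
  apply/andP; split.
    apply: divr_ge0; last exact: ltW.
    by apply: sumr_ge0 => i _; case/andP: (proj2 (Hi i)).
  rewrite ler_pdivrMr // mul1r -[T]mul1r -l1 mulr_suml.
  by apply: ler_sum => i _; case/andP: (proj2 (Hi i)).
rewrite u0E scalerA divfK ?gt_eqF // -xv.
by rewrite addrC subrK.
Qed.

Lemma tparN a v u : tpar (- a) v u *: (- a) = tpar a v u *: a.
Proof. by rewrite /tpar !dotNl dotNr opprK mulNr scaleNr scalerN opprK. Qed.

Lemma reflN a v : refl (- a) v = refl a v.
Proof. by rewrite /refl !dotNl dotNr opprK mulrN mulNr scaleNr scalerN opprK. Qed.

Lemma backward (V : seq vec) v w :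
  inscribed (conv V) -> is_vertex (conv V) v ->
  (exists W : vec -> Prop, is_wall (normal_cone (conv V) v) W /\
    exists alpha : vec, alpha != 0 /\ (forall x, lspan W x <-> dot alpha x = 0) /\
      w = refl alpha v) ->
  neighbor (conv V) v w.
Proof.
move=> Hins Hv [W [[[c0 [b0 [Hf Hw]]] [k [[[a0 [Wa0 _]] _] _]]] [al [an [Hsp ->]]]]].
pose N := normal_cone (conv V) v.
have WN : forall x, W x -> N x by move=> x /Hw [].
have Wc0 : forall x, W x -> dot c0 x = b0 by move=> x /Hw [].
have Wal : forall x, W x -> dot al x = 0.
  move=> x Wx; apply/Hsp; exists [:: x]; split; last exact: memv_span1.
  by move=> y; rewrite inE => /eqP ->.
have N0 : N 0 by move=> y _; rewrite !dot0l.
have NZ : forall x k, 0 <= k -> N x -> N (k *: x).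
  by move=> x k' k0 Nx y Py; rewrite !dotZl ler_wpM2l // Nx.
have ND : forall x y, N x -> N y -> N (x + y).
  by move=> x y Nx Ny z Pz; rewrite !dotDl lerD // ?Nx ?Ny.
have b00 : b0 = 0.
  have h1 := Hf 0 N0; rewrite dot0r in h1.
  have h2 := Hf _ (ND _ _ (WN _ Wa0) (WN _ Wa0)); rewrite dotDr Wc0 // in h2.
  lra.
have WD : forall x y, W x -> W y -> W (x + y).
  move=> x y Wx Wy; apply/Hw; split; first by apply: ND; apply: WN.
  by rewrite dotDr !Wc0 // b00 addr0.
have Nle : forall c u, N c -> u \in V -> dot c (u - v) <= 0.
  by move=> c u Nc uV; rewrite dotBr subr_le0; apply: Nc; apply: conv_mem.
have [cs [Wcs Hcs]] : exists cs, W cs /\ forall u, u \in V ->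
    dot cs (u - v) < 0 \/ (forall c', W c' -> dot c' (u - v) = 0).
  suff gen : forall l : seq vec, {subset l <= V} -> exists cs, W cs /\ forall u, u \in l ->
      dot cs (u - v) < 0 \/ (forall c', W c' -> dot c' (u - v) = 0).
    exact: gen.
  elim => [|u l IH] sub.
    by exists a0; split => // u; rewrite in_nil.
  have [cs [Wcs Hcs]] : exists cs, W cs /\ forall u, u \in l ->
      dot cs (u - v) < 0 \/ (forall c', W c' -> dot c' (u - v) = 0).
    by apply: IH => x xl; apply: sub; rewrite inE xl orbT.
  have uV : u \in V by apply: sub; rewrite mem_head.
  destruct (classic (forall c', W c' -> dot c' (u - v) = 0)) as [Hu|Hu].
    exists cs; split => // x; rewrite inE => /orP [/eqP ->|xl]; [by right | exact: Hcs].
  have [c' Hc'] := not_all_ex_not _ _ Hu.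
  have [Wc' nc'] := imply_to_and _ _ Hc'.
  have lt' : dot c' (u - v) < 0.
    by rewrite lt_neqAle (Nle _ _ (WN _ Wc') uV) andbT; apply/eqP.
  exists (cs + c'); split; first exact: WD.
  have xV : forall x, x \in l -> x \in V by move=> x xl; apply: sub; rewrite inE xl orbT.
  move=> x; rewrite inE => /orP [/eqP ->|xl].
    left; rewrite dotDl.
    have := Nle _ _ (WN _ Wcs) uV; lra.
  case: (Hcs x xl) => [h|h]; last by right.
  left; rewrite dotDl; have := Nle _ _ (WN _ Wc') (xV x xl); lra.
have Ncs := WN cs Wcs.
have acs : dot al cs = 0 := Wal cs Wcs.
have par : forall u, u \in V -> (forall c', W c' -> dot c' (u - v) = 0) ->
    u - v = tpar al v u *: al.
  move=> u uV Hu; rewrite /tpar; apply: (par_lemma an) => y ay.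
  have [s [Hs ys]] := proj2 (Hsp y) ay.
  by apply: (lspan_perp (s := s)) ys => z zs; rewrite dotC; apply: Hu; apply: Hs.
have H3 : forall u, u \in V -> dot cs (u - v) < 0 \/ u - v = tpar al v u *: al.
  by move=> u uV; case: (Hcs u uV) => [h|h]; [left | right; exact: par].
destruct (classic (exists u, u \in V /\ ~~ (dot cs (u - v) < 0) /\ dot al (u - v) != 0))
  as [[u1 [u1V [ns1 nz]]]|Hno].
  case: (ltrP 0 (dot al (u1 - v))) => h.
    by apply: (core Hins Hv an Ncs acs H3); exists u1.
  rewrite -reflN; apply: (core Hins Hv (b := - al)).
  - by rewrite oppr_eq0.
  - exact: Ncs.
  - by rewrite dotNl acs oppr0.
  - by move=> u uV; rewrite tparN; apply: H3.
  exists u1 => //; split => //; rewrite dotNl oppr_gt0 lt_neqAle nz h.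
  by [].
have nsz : forall u, u \in V -> ~~ (dot cs (u - v) < 0) -> u - v = 0.
  move=> u uV nsu; have [h|h] := H3 u uV; first by rewrite h in nsu.
  rewrite h /tpar.
  destruct (classic (dot al (u - v) = 0)) as [z|z].
    by rewrite z mul0r scale0r.
  by exfalso; apply: Hno; exists u; split => //; split => //; apply/eqP.
have H0 : forall u, u \in V -> dot cs (u - v) < 0 -> dot cs (u - v) < 0 by [].
have [e [e0 He]] := @eps_lemma _ V (fun u => dot cs (u - v) < 0)
   (fun u => dot cs (u - v)) (fun u => `|dot al (u - v)|) H0.
have Npm : forall sg : R, sg ^+ 2 = 1 -> N (cs + (sg * e) *: al).
  move=> sg sg1 y Py; apply: (conv_le _ Py) => u uV.
  rewrite -subr_le0 -dotBr dotDl dotZl.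
  case: (boolP (dot cs (u - v) < 0)) => hs.
    have h1 := He u uV hs.
    have h2 := ler_norm (sg * dot al (u - v)).
    rewrite normrM in h2.
    have sgn : `|sg| = 1.
      by move/eqP: sg1; rewrite sqrf_eq1 => /orP [/eqP -> | /eqP ->]; rewrite ?normrN normr1.
    rewrite sgn mul1r in h2.
    have h3 : e * (sg * dot al (u - v)) <= e * `|dot al (u - v)| by rewrite (ler_wpM2l (ltW e0)).
    rewrite -mulrA; lra.
  by rewrite (nsz u uV hs) !dot0r ?mulr0 ?addr0.
have Np := Npm 1 (expr1n _ _).
have Nm := Npm (-1) ltac:(by rewrite sqrrN expr1n).
rewrite mul1r in Np; rewrite mulN1r in Nm.
have h1 := Hf _ Np; have h2 := Hf _ Nm.
rewrite !dotDr !dotZr Wc0 // b00 in h1 h2.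
have c0a : dot c0 al = 0 by nra.
have Wp : W (cs + e *: al).
  by apply/Hw; split => //; rewrite dotDr dotZr c0a mulr0 addr0 Wc0.
have := Wal _ Wp; rewrite dotDr dotZr acs add0r => /eqP.
by rewrite mulf_eq0 (gt_eqF e0) /= (gt_eqF (dot_gt0 an)).
Qed.
End S.

Theorem corollary2p3 (R : realFieldType) (d : nat) (V : seq 'rV[R]_d)
    (v : 'rV[R]_d) :
  inscribed (conv V) -> is_vertex (conv V) v ->
  forall w : 'rV[R]_d,
    neighbor (conv V) v w <->
    exists W : 'rV[R]_d -> Prop,
      is_wall (normal_cone (conv V) v) W /\
      exists alpha : 'rV[R]_d,
        alpha != 0 /\ (forall x, lspan W x <-> dot alpha x = 0) /\
        w = refl alpha v.
Proof.
move=> Hins Hv w; split; first exact: forward.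
exact: backward.
Qed.
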